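(* Let $n,m$ be integers with $1\le n\le m$ and let $(G,\sigma)$ be a signed graph with $G=P_n\,\square\,P_m$ (a signed grid). Then $\chi_s(G,\sigma)\le 6$. If $n\le 4$, then $\chi_s(G,\sigma)\le 5$. Moreover, there exist signed grids (signed graphs whose underlying graph is $P_n\,\square\,P_m$ for some $n,m$) with chromatic number $5$.
   Context: A signed graph $(G,\sigma)$ is a simple loopless undirected graph $G$ with a signature $\sigma:E(G)\to\{+1,-1\}$. Switching a vertex $v$ negates the sign of every edge incident to $v$; two signatures are equivalent if one is obtained from the other by switching a set of vertices. A homomorphism of $(G,\sigma)$ to $(H,\pi)$ is a graph homomorphism $\varphi:G\to H$ for which there is a signature $\sigma'$ equivalent to $\sigma$ with $\pi(\varphi(u)\varphi(v))=\sigma'(uv)$ for every edge $uv$ of $G$. $\chi_s(G,\sigma)$ is the smallest order of a signed graph to which $(G,\sigma)$ admits a homomorphism. $P_n$ is the path on $n$ vertices and $\square$ is the Cartesian product of graphs. *)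

(* Defs.v *)
From Stdlib Require Import ClassicalEpsilon.
From mathcomp Require Import all_boot.
Set Implicit Arguments. Unset Strict Implicit. Unset Printing Implicit Defensive.

Definition simple_graph (T : finType) (e : rel T) : Prop :=
  symmetric e /\ irreflexive e.

(* A signature on the edges of (T, e): s u v = true means the edge uv is
   negative (sign -1), false means positive (+1). *)
Definition signature_on (T : finType) (e : rel T) (s : rel T) : Prop :=
  forall u v, e u v -> s u v = s v u.

Definition switch (T : finType) (S : {set T}) (s : rel T) : rel T :=
  fun u v => s u v (+) (u \in S) (+) (v \in S).

Definition signed_hom (T U : finType) (eG : rel T) (sigma : rel T)
    (eH : rel U) (pi : rel U) (phi : T -> U) : Prop :=
  exists S : {set T}, forall u v, eG u v ->
    eH (phi u) (phi v) /\ pi (phi u) (phi v) = switch S sigma u v.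

(* (G, sigma) admits a homomorphism to some signed graph of order k
   (vertex set 'I_k, up to isomorphism any graph of order k). *)
Definition hom_to_order (T : finType) (eG sigma : rel T) (k : nat) : Prop :=
  exists (eH piH : rel 'I_k), simple_graph eH /\ signature_on eH piH /\
    exists phi : T -> 'I_k, signed_hom eG sigma eH piH phi.

Definition hom_to_order_b (T : finType) (eG sigma : rel T) : pred nat :=
  fun k => if excluded_middle_informative (hom_to_order eG sigma k)
           then true else false.

(* chi_s(G, sigma): smallest order of a signed graph to which (G, sigma)
   admits a homomorphism (0 if none exists, which never happens for
   a simple graph with a signature). *)
Definition chi_s (T : finType) (eG sigma : rel T) : nat :=
  match excluded_middle_informative (exists k, hom_to_order_b eG sigma k) with
  | left h => ex_minn h
  | right _ => 0
  end.

Definition grid_adj (n m : nat) : rel ('I_n * 'I_m) :=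
  fun x y =>
    ((x.1 == y.1) && (((val x.2).+1 == val y.2) || ((val y.2).+1 == val x.2)))
    || ((x.2 == y.2) && (((val x.1).+1 == val y.1) || ((val y.1).+1 == val x.1))).
Arguments grid_adj : clear implicits.

(* Main.v *)
From Stdlib Require Import ClassicalEpsilon.
Require Import Defs.
From mathcomp Require Import all_boot zify.
Set Implicit Arguments. Unset Strict Implicit. Unset Printing Implicit Defensive.

Definition sg n m (sigma : rel ('I_n * 'I_m)) (i j i' j' : nat) : bool :=
  match (insub i : option 'I_n), (insub j : option 'I_m),
        (insub i' : option 'I_n), (insub j' : option 'I_m) with
  | Some a, Some b, Some a', Some b' => sigma (a, b) (a', b')
  | _, _, _, _ => false
  end.
Definition sv n m (sigma : rel ('I_n * 'I_m)) i j := sg sigma i j i.+1 j.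
Definition sh n m (sigma : rel ('I_n * 'I_m)) i j := sg sigma i j i j.+1.
Definition Fface n m (sigma : rel ('I_n * 'I_m)) i j :=
  sv sigma i j (+) sv sigma i j.+1 (+) sh sigma i j (+) sh sigma i.+1 j.

Section Bits.
Fixpoint bit0 n m (sigma : rel ('I_n * 'I_m)) (P : nat -> nat -> bool) (c : nat -> nat -> nat) j :=
  match j with 0 => false
  | j'.+1 => bit0 sigma P c j' (+) sh sigma 0 j' (+) P (c 0 j') (c 0 j) end.
Fixpoint bitf n m (sigma : rel ('I_n * 'I_m)) (P : nat -> nat -> bool) (c : nat -> nat -> nat) i j :=
  match i with 0 => bit0 sigma P c j
  | i'.+1 => bitf sigma P c i' j (+) sv sigma i' j (+) P (c i' j) (c i j) end.
End Bits.

Lemma core n m (sigma : rel ('I_n * 'I_m)) k (P : nat -> nat -> bool) (c : nat -> nat -> nat) :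
 signature_on (grid_adj n m) sigma ->
 (forall a b, P a b = P b a) ->
 (forall i j, c i j < k) ->
 (forall i j, i.+1 < n -> j < m -> c i j != c i.+1 j) ->
 (forall i j, i < n -> j.+1 < m -> c i j != c i j.+1) ->
 (forall i j, i.+1 < n -> j.+1 < m ->
    P (c i j) (c i.+1 j) (+) P (c i j.+1) (c i.+1 j.+1) (+) P (c i j) (c i j.+1)
      (+) P (c i.+1 j) (c i.+1 j.+1) = Fface sigma i j) ->
 hom_to_order (grid_adj n m) sigma k.
Proof.
move=> Hsig PS ck Hv Hh Hf.
have Hhb : forall i j, i < n -> j.+1 < m ->
    bitf sigma P c i j.+1 = bitf sigma P c i j (+) sh sigma i j (+) P (c i j) (c i j.+1).
  elim=> [|i IH] j Hi Hj; first by [].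
  rewrite /= IH ?(ltn_trans _ Hi) //.
  move: (Hf i j Hi Hj); rewrite /Fface.
  case: (bitf sigma P c i j); case: (sh sigma i j); case: (sh sigma i.+1 j);
  case: (sv sigma i j); case: (sv sigma i j.+1);
  case: (P (c i j) (c i.+1 j)); case: (P (c i j.+1) (c i.+1 j.+1));
  case: (P (c i j) (c i j.+1)); case: (P (c i.+1 j) (c i.+1 j.+1)) => //.
exists (fun a b : 'I_k => a != b), (fun a b : 'I_k => P a b).
split; first by split => [a b|a]; [rewrite eq_sym | rewrite eqxx].
split; first by move=> a b _; apply: PS.
exists (fun x : 'I_n * 'I_m => Ordinal (ck x.1 x.2)).
exists [set x : 'I_n * 'I_m | bitf sigma P c x.1 x.2].
pose G := fun u v : 'I_n * 'I_m =>
  ((Ordinal (ck u.1 u.2)) != (Ordinal (ck v.1 v.2))) /\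
  P (Ordinal (ck u.1 u.2)) (Ordinal (ck v.1 v.2)) =
  switch [set x : 'I_n * 'I_m | bitf sigma P c x.1 x.2] sigma u v.
have Gsym : forall u v, grid_adj n m u v -> G v u -> G u v.
  move=> u v Huv [H1 H2]; split; first by rewrite eq_sym.
  by rewrite PS /= H2 /switch (Hsig u v Huv) addbAC.
have Gh : forall (a : 'I_n) (b b' : 'I_m), (b : nat).+1 = b' -> G (a, b) (a, b').
  move=> a b b' e; split.
    apply/negP => /eqP /(congr1 val) /= /eqP; apply/negP.
    by rewrite -e; apply: Hh => //; rewrite e.
  rewrite /switch !inE /= -e Hhb //; last by rewrite e.
  have -> : sigma (a, b) (a, b') = sh sigma a b by rewrite /sh /sg e !valK.
  by case: (bitf _ _ _ _ _); case: (sh _ _ _); case: (P _ _).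
have Gv : forall (a a' : 'I_n) (b : 'I_m), (a : nat).+1 = a' -> G (a, b) (a', b).
  move=> a a' b e; split.
    apply/negP => /eqP /(congr1 val) /= /eqP; apply/negP.
    by rewrite -e; apply: Hv => //; rewrite e.
  rewrite /switch !inE /= -e /=.
  have -> : sigma (a, b) (a', b) = sv sigma a b by rewrite /sv /sg e !valK.
  by case: (bitf _ _ _ _ _); case: (sv _ _ _); case: (P _ _).
move=> [a b] [a' b'] Hadj; have := Hadj; rewrite /grid_adj /=.
case/orP => /andP [/eqP e1 /orP [/eqP e2|/eqP e2]]; subst.
- exact: Gh.
- by apply: (Gsym _ _ Hadj); apply: Gh.
- exact: Gv.
- by apply: (Gsym _ _ Hadj); apply: Gv.
Qed.


Lemma hob_true (T : finType) (eG sigma : rel T) k :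
  hom_to_order eG sigma k -> hom_to_order_b eG sigma k.
Proof. by rewrite /hom_to_order_b; case: excluded_middle_informative. Qed.

Lemma hob_false (T : finType) (eG sigma : rel T) k :
  hom_to_order_b eG sigma k -> hom_to_order eG sigma k.
Proof. by rewrite /hom_to_order_b; case: excluded_middle_informative. Qed.

Lemma chi_le (T : finType) (eG sigma : rel T) k :
  hom_to_order eG sigma k -> chi_s eG sigma <= k.
Proof.
move=> /hob_true H; rewrite /chi_s; case: excluded_middle_informative => [h|[]].
  by case: ex_minnP => x _ Hm; apply: Hm.
by exists k.
Qed.

Lemma chi_ge (T : finType) (eG sigma : rel T) k0 :
  hom_to_order eG sigma k0 -> (forall k, k < 5 -> ~ hom_to_order eG sigma k) ->
  5 <= chi_s eG sigma.
Proof.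
move=> /hob_true H Hn; rewrite /chi_s; case: excluded_middle_informative => [h|[]].
  case: ex_minnP => x /hob_false Hx _; rewrite leqNgt; apply/negP => /Hn; exact.
by exists k0.
Qed.

Definition P6' (a b : nat) : bool :=
  if (a == 5) || (b == 5) then false
  else ((a + 5 - b) %% 5 == 2) || ((a + 5 - b) %% 5 == 3).
Definition P6 a b := P6' (minn a b) (maxn a b).
Lemma P6S a b : P6 a b = P6 b a.
Proof. by rewrite /P6 minnC maxnC. Qed.

Fixpoint pickl (l : seq nat) (p : nat -> bool) : nat :=
  match l with [::] => 0 | x :: l' => if p x then x else pickl l' p end.

Definition first6 a b := pickl (iota 0 6) (fun z => (z != a) && (z != b)).
Definition next6 u l a r :=
  pickl (iota 0 6) (fun z => [&& z != u, z != l, z != a & (P6 u z (+) P6 l z) == r]).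

Lemma in6 a : a < 6 -> a \in iota 0 6.
Proof. by rewrite mem_iota. Qed.

Lemma first6_ok a b : a < 6 -> b < 6 ->
  [&& first6 a b < 6, first6 a b != a & first6 a b != b].
Proof.
have H : all (fun a => all (fun b => [&& first6 a b < 6, first6 a b != a & first6 a b != b]) (iota 0 6)) (iota 0 6) by [].
by move=> /in6 Ha /in6 Hb; move/allP/(_ a Ha)/allP/(_ b Hb): H.
Qed.

Lemma next6_ok u l a r : u < 6 -> l < 6 -> a < 6 -> u != l ->
  let z := next6 u l a r in
  [&& z < 6, z != u, z != l, z != a & (P6 u z (+) P6 l z) == r].
Proof.
have H : all (fun u => all (fun l => all (fun a => all (fun r => (u != l) ==>
  let z := next6 u l a r in
  [&& z < 6, z != u, z != l, z != a & (P6 u z (+) P6 l z) == r]) [:: true; false]) (iota 0 6)) (iota 0 6)) (iota 0 6)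
  by vm_compute.
move=> /in6 Hu /in6 Hl /in6 Ha Hul.
move/allP/(_ u Hu)/allP/(_ l Hl)/allP/(_ a Ha)/allP/(_ r): H.
by rewrite Hul; case: r => /(_ isT).
Qed.

Fixpoint newcol (x : nat -> nat) (F : nat -> bool) (i : nat) : nat :=
  match i with
  | 0 => first6 (x 0) (x 1)
  | i'.+1 => let y := newcol x F i' in
      next6 y (x i) (x i.+1) (F i' (+) P6 (x i') (x i) (+) P6 (x i') y)
  end.

Lemma newcol_ok x F : (forall i, x i < 6) ->
  forall i, [&& newcol x F i < 6, newcol x F i != x i & newcol x F i != x i.+1].
Proof.
move=> Hx; elim=> [|i /and3P [H1 H2 H3]] /=; first by apply: first6_ok.
by case/and5P: (next6_ok (F i (+) P6 (x i) (x i.+1) (+) P6 (x i) (newcol x F i)) H1 (Hx i.+1) (Hx i.+2) H3) => -> _ -> -> _.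
Qed.

Lemma newcol_face x F : (forall i, x i < 6) -> forall i,
  newcol x F i != newcol x F i.+1 /\
  P6 (x i) (x i.+1) (+) P6 (newcol x F i) (newcol x F i.+1) (+) P6 (x i) (newcol x F i)
      (+) P6 (x i.+1) (newcol x F i.+1) = F i.
Proof.
move=> Hx i; case/and3P: (newcol_ok F Hx i) => H1 H2 H3 /=.
case/and5P: (next6_ok (F i (+) P6 (x i) (x i.+1) (+) P6 (x i) (newcol x F i)) H1 (Hx i.+1) (Hx i.+2) H3) => _ A _ _ /eqP B.
split; first by rewrite eq_sym.
move: B; set z := next6 _ _ _ _.
case: (P6 (newcol x F i) z); case: (P6 (x i.+1) z); case: (F i);
case: (P6 (x i) (x i.+1)); case: (P6 (x i) (newcol x F i)) => //.
Qed.

Fixpoint col6 (F : nat -> nat -> bool) (j : nat) : nat -> nat :=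
  match j with
  | 0 => fun i => if odd i then 1 else 0
  | j'.+1 => newcol (col6 F j') (fun i => F i j')
  end.

Lemma col6_lt F j i : col6 F j i < 6.
Proof.
elim: j i => [|j IH] i /=; first by case: odd.
by case/and3P: (newcol_ok (fun i => F i j) IH i).
Qed.

Lemma part1 n m (sigma : rel ('I_n * 'I_m)) :
  signature_on (grid_adj n m) sigma -> chi_s (grid_adj n m) sigma <= 6.
Proof.
move=> Hs; apply: chi_le.
have := (core (k:=6) (c:=fun i j => col6 (Fface sigma) j i) Hs P6S); apply.
- by move=> i j; apply: col6_lt.
- move=> i j _ _; case: j => [|j] /=; first by case: odd.
  by case: (newcol_face (fun i => Fface sigma i j) (@col6_lt (Fface sigma) j) i).
- move=> i j _ _ /=.
  by case/and3P: (newcol_ok (fun i => Fface sigma i j) (@col6_lt (Fface sigma) j) i); rewrite eq_sym.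
- move=> i j _ _ /=.
  by case: (newcol_face (fun i => Fface sigma i j) (@col6_lt (Fface sigma) j) i).
Qed.


Definition P5' (a b : nat) : bool :=
  [|| (a == 1) && (b == 4), (a == 2) && (b == 3) | (a == 3) && (b == 4)].
Definition P5 a b := P5' (minn a b) (maxn a b).
Lemma P5S a b : P5 a b = P5 b a.
Proof. by rewrite /P5 minnC maxnC. Qed.

Definition st := (nat * nat * nat * nat)%type.
Definition get (s : st) (i : nat) : nat :=
  match i with 0 => s.1.1.1 | 1 => s.1.1.2 | 2 => s.1.2 | _ => s.2 end.

Definition Good : seq st := [:: (0,1,4,3); (0,2,1,2); (0,2,1,3); (0,2,3,4); (0,2,4,0); (0,3,0,1); (0,3,2,4); (0,3,4,2); (0,4,0,1); (0,4,1,0); (0,4,3,1); (1,0,3,2); (1,0,4,2); (1,2,3,0); (1,2,3,2); (1,2,4,1); (1,2,4,2); (1,3,0,2); (1,3,0,3); (1,3,2,3); (1,3,2,4); (1,3,4,1); (1,4,3,0); (2,0,2,1); (2,0,3,1); (2,0,4,3); (2,1,0,4); (2,1,2,0); (2,1,3,4); (2,1,4,3); (2,3,2,0); (2,4,1,0); (2,4,2,3); (3,0,1,4); (3,1,2,0); (3,1,2,1); (3,1,2,4); (3,1,3,0); (3,1,3,2); (3,2,1,0); (3,4,0,2); (3,4,2,1); (3,4,3,1); (4,0,1,0); (4,0,1,3); (4,0,1,4); (4,0,2,0); (4,0,2,1); (4,0,3,2); (4,0,3,4); (4,0,4,2); (4,1,0,3); (4,1,2,0); (4,1,3,1); (4,1,3,4);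 (4,2,4,1); (4,3,0,1); (4,3,0,2); (4,3,2,0)].

Definition face5 (x y : st) i :=
  P5 (get x i) (get x i.+1) (+) P5 (get y i) (get y i.+1) (+) P5 (get x i) (get y i)
    (+) P5 (get x i.+1) (get y i.+1).
Definition fv (f0 f1 f2 : bool) (i : nat) := nth false [:: f0; f1; f2] i.
Definition tr (x y : st) (f : nat -> bool) :=
  all (fun i => get y i != get x i) (iota 0 4) && all (fun i => face5 x y i == f i) (iota 0 3).

Fixpoint picks (l : seq st) (p : st -> bool) (d : st) : st :=
  match l with [::] => d | y :: l' => if p y then y else picks l' p d end.
Definition next5 x f0 f1 f2 := picks Good (fun y => tr x y (fv f0 f1 f2)) x.

Definition validst (x : st) :=
  all (fun i => get x i < 5) (iota 0 4) && all (fun i => get x i != get x i.+1) (iota 0 3).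

Lemma Good_valid x : x \in Good -> validst x.
Proof. by move: x; apply/allP; vm_compute. Qed.

Lemma next5_ok x f0 f1 f2 : x \in Good ->
  (next5 x f0 f1 f2 \in Good) && tr x (next5 x f0 f1 f2) (fv f0 f1 f2).
Proof.
have H : all (fun x => all (fun f0 => all (fun f1 => all (fun f2 =>
   (next5 x f0 f1 f2 \in Good) && tr x (next5 x f0 f1 f2) (fv f0 f1 f2))
   [:: true; false]) [:: true; false]) [:: true; false]) Good by vm_compute.
have Hb : forall b : bool, b \in [:: true; false] by case.
by move=> Hx; move/allP/(_ x Hx)/allP/(_ f0 (Hb f0))/allP/(_ f1 (Hb f1))/allP/(_ f2 (Hb f2)): H.
Qed.

Fixpoint col5 (F : nat -> nat -> bool) (j : nat) : st :=
  match j with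
  | 0 => (0,1,4,3)
  | j'.+1 => next5 (col5 F j') (F 0 j') (F 1 j') (F 2 j')
  end.

Lemma col5_good F j : col5 F j \in Good.
Proof. by elim: j => [|j IH] //=; case/andP: (next5_ok (F 0 j) (F 1 j) (F 2 j) IH). Qed.

Lemma part2_hom n m (sigma : rel ('I_n * 'I_m)) :
  n <= 4 -> signature_on (grid_adj n m) sigma -> hom_to_order (grid_adj n m) sigma 5.
Proof.
move=> Hn Hs.
have := (core (k:=5) (c:=fun i j => get (col5 (Fface sigma) j) i) Hs P5S); apply.
- move=> i j; case/andP: (Good_valid (col5_good (Fface sigma) j)) => /allP H _.
  by case: i => [|[|[|i]]]; [apply: H..|apply: (H 3)].
- move=> i j Hi _; case/andP: (Good_valid (col5_good (Fface sigma) j)) => _ /allP H.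
  by apply: H; rewrite mem_iota /=; lia.
- move=> i j Hi _ /=; case/andP: (next5_ok (Fface sigma 0 j) (Fface sigma 1 j) (Fface sigma 2 j) (col5_good (Fface sigma) j)) => _ /andP [/allP H _].
  by rewrite eq_sym; apply: H; rewrite mem_iota /=; lia.
- move=> i j Hi _ /=; case/andP: (next5_ok (Fface sigma 0 j) (Fface sigma 1 j) (Fface sigma 2 j) (col5_good (Fface sigma) j)) => _ /andP [_ /allP H].
  have Hi3 : i < 3 by lia.
  move/(_ i): H; rewrite mem_iota /= Hi3 => /(_ isT) /eqP.
  rewrite /face5 /fv.
  by case: i Hi3 {Hi} => [|[|[|i]]] //= _ <-.
Qed.

Lemma part2 n m (sigma : rel ('I_n * 'I_m)) :
  n <= 4 -> signature_on (grid_adj n m) sigma -> chi_s (grid_adj n m) sigma <= 5.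
Proof. by move=> Hn Hs; apply: chi_le; apply: part2_hom. Qed.


Definition negp (i j i' j' : nat) : bool :=
  (i == i') && [|| (i == 1) && (minn j j' == 0), (i == 1) && (minn j j' == 2)
                 | (i == 2) && (minn j j' == 1)].
Definition sigma_ex : rel ('I_3 * 'I_4) :=
  fun u v => negp u.1 u.2 v.1 v.2.

Lemma sigma_ex_sym : signature_on (grid_adj 3 4) sigma_ex.
Proof.
move=> u v _; rewrite /sigma_ex /negp.
by have [e|ne] := eqVneq (u.1 : nat) v.1; [rewrite e minnC|].
Qed.

Definition tab (q01 q02 q03 q12 q13 q23 : bool) (a b : nat) : bool :=
  match minn a b, maxn a b with
  | 0, 1 => q01 | 0, 2 => q02 | 0, 3 => q03 | 1, 2 => q12 | 1, 3 => q13 | 2, 3 => q23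
  | _, _ => false end.

Definition t3 := (nat * nat * nat)%type.
Definition g3 (x : t3) (i : nat) : nat :=
  match i with 0 => x.1.1 | 1 => x.1.2 | _ => x.2 end.
Definition col3 : seq t3 :=
  flatten (map (fun a => flatten (map (fun b => map (fun c => (a, b, c)) (iota 0 4)) (iota 0 4))) (iota 0 4)).
Definition face3 (t : nat -> nat -> bool) (x y : t3) i :=
  t (g3 x i) (g3 x i.+1) (+) t (g3 y i) (g3 y i.+1) (+) t (g3 x i) (g3 y i)
    (+) t (g3 x i.+1) (g3 y i.+1).
Definition tr3 t (x y : t3) (f0 f1 : bool) :=
  [&& g3 x 0 != g3 x 1, g3 x 1 != g3 x 2, g3 y 0 != g3 y 1, g3 y 1 != g3 y 2,
      g3 x 0 != g3 y 0, g3 x 1 != g3 y 1, g3 x 2 != g3 y 2,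
      face3 t x y 0 == f0 & face3 t x y 1 == f1].
Definition Fex (i j : nat) : bool :=
  nth false (nth [::] [:: [:: true; false; true]; [:: true; true; true]] i) j.

Definition chk t :=
  all (fun x0 => all (fun x1 =>
    if tr3 t x0 x1 (Fex 0 0) (Fex 1 0) then
      all (fun x2 => if tr3 t x1 x2 (Fex 0 1) (Fex 1 1) then
        all (fun x3 => ~~ tr3 t x2 x3 (Fex 0 2) (Fex 1 2)) col3 else true) col3
    else true) col3) col3.

Lemma chk_all q01 q02 q03 q12 q13 q23 : chk (tab q01 q02 q03 q12 q13 q23).
Proof. by move: q01 q02 q03 q12 q13 q23; do 6 case; vm_compute. Qed.

Lemma mem_col3 a b c : a < 4 -> b < 4 -> c < 4 -> (a, b, c) \in col3.
Proof.
by case: a => [|[|[|[|a]]]] // _; case: b => [|[|[|[|b]]]] // _;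
   case: c => [|[|[|[|c]]]].
Qed.

Lemma chk_false t x0 x1 x2 x3 : chk t -> x0 \in col3 -> x1 \in col3 -> x2 \in col3 -> x3 \in col3 ->
  tr3 t x0 x1 (Fex 0 0) (Fex 1 0) -> tr3 t x1 x2 (Fex 0 1) (Fex 1 1) ->
  tr3 t x2 x3 (Fex 0 2) (Fex 1 2) -> False.
Proof.
move=> /allP/(_ x0) H H0 H1 H2 H3 T0 T1 T2.
move: (H H0) => /allP/(_ x1 H1); rewrite T0 => /allP/(_ x2 H2); rewrite T1.
by move=> /allP/(_ x3 H3); rewrite T2.
Qed.

Lemma xor_cancel (a b c d m1 m2 m3 m4 : bool) :
  (a (+) m1 (+) m2) (+) (b (+) m3 (+) m4) (+) (c (+) m1 (+) m3) (+) (d (+) m2 (+) m4)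
  = a (+) b (+) c (+) d.
Proof. by move: a b c d m1 m2 m3 m4; do 8 case. Qed.

Lemma adj_v i j : i < 2 -> j < 4 ->
  grid_adj 3 4 (inord i, inord j) (inord i.+1, inord j).
Proof.
move=> Hi Hj; rewrite /grid_adj /= !inordK ?eqxx ?orbT //; lia.
Qed.

Lemma adj_h i j : i < 3 -> j < 3 ->
  grid_adj 3 4 (inord i, inord j) (inord i, inord j.+1).
Proof.
move=> Hi Hj; rewrite /grid_adj /= !inordK ?eqxx //=; lia.
Qed.

Lemma lower k : k < 5 -> ~ hom_to_order (grid_adj 3 4) sigma_ex k.
Proof.
move=> Hk [eH [piH [[esym eirr] [psig [phi [S H]]]]]].
pose c i j := val (phi (inord i, inord j)).
pose Q a b := match (insub a : option 'I_k), (insub b : option 'I_k) with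
  | Some x, Some y => piH x y | _, _ => false end.
pose Q' a b := Q (minn a b) (maxn a b).
have HE : forall u v, grid_adj 3 4 u v ->
    val (phi u) != val (phi v) /\ Q' (val (phi u)) (val (phi v)) = switch S sigma_ex u v.
  move=> u v Huv; case: (H u v Huv) => E Pe; split.
    by apply/eqP => /val_inj e; rewrite e eirr in E.
  rewrite /Q' /Q /=; case: (leqP (val (phi u)) (val (phi v))) => h.
    by rewrite !valK.
  by rewrite !valK -(psig _ _ E).
have lt4 : forall i j, c i j < 4.
  move=> i j; have Hk4 : k <= 4 by []. exact: (leq_trans (ltn_ord (phi (inord i, inord j))) Hk4).
have Nv : forall i j, i < 2 -> j < 4 -> c i j != c i.+1 j.
  by move=> i j Hi Hj; case: (HE _ _ (adj_v Hi Hj)).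
have Nh : forall i j, i < 3 -> j < 3 -> c i j != c i j.+1.
  by move=> i j Hi Hj; case: (HE _ _ (adj_h Hi Hj)).
have Hface : forall i j, i < 2 -> j < 3 ->
    Q' (c i j) (c i.+1 j) (+) Q' (c i j.+1) (c i.+1 j.+1) (+) Q' (c i j) (c i j.+1)
      (+) Q' (c i.+1 j) (c i.+1 j.+1) = Fex i j.
  move=> i j Hi Hj.
  have Hi' : i < 3 by lia.
  have Hj' : j < 4 by lia.
  have Hi'' : i.+1 < 3 by lia.
  have Hj'' : j.+1 < 4 by lia.
  rewrite /c (HE _ _ (adj_v Hi Hj')).2 (HE _ _ (adj_v Hi Hj'')).2 (HE _ _ (adj_h Hi' Hj)).2
     (HE _ _ (adj_h Hi'' Hj)).2 /switch xor_cancel /sigma_ex /= !inordK //.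
  by case: i Hi {Hi' Hi''} => [|[|]] // _; case: j Hj {Hj' Hj''} => [|[|[|]]].
pose T := tab (Q' 0 1) (Q' 0 2) (Q' 0 3) (Q' 1 2) (Q' 1 3) (Q' 2 3).
have TQ : forall a b, a < 4 -> b < 4 -> a != b -> T a b = Q' a b.
  by move=> a b; case: a => [|[|[|[|a]]]] // _; case: b => [|[|[|[|b]]]].
have Htr : forall j, j < 3 ->
    tr3 T (c 0 j, c 1 j, c 2 j) (c 0 j.+1, c 1 j.+1, c 2 j.+1) (Fex 0 j) (Fex 1 j).
  move=> j Hj; have Hj' : j < 4 by lia.
  have Hj'' : j.+1 < 4 by lia.
  rewrite /tr3 /face3 /= !TQ ?Nv ?Nh ?lt4 //.
  by rewrite (Hface 0 j) // (Hface 1 j) // !eqxx.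
apply: (@chk_false T _ _ _ _ (chk_all _ _ _ _ _ _)
  (mem_col3 (lt4 0 0) (lt4 1 0) (lt4 2 0)) (mem_col3 (lt4 0 1) (lt4 1 1) (lt4 2 1))
  (mem_col3 (lt4 0 2) (lt4 1 2) (lt4 2 2)) (mem_col3 (lt4 0 3) (lt4 1 3) (lt4 2 3))
  (Htr 0 isT) (Htr 1 isT) (Htr 2 isT)).
Qed.


Theorem theorem4p5 :
  (forall (n m : nat) (sigma : rel ('I_n * 'I_m)),
      1 <= n <= m -> signature_on (grid_adj n m) sigma ->
      chi_s (grid_adj n m) sigma <= 6)
  /\ (forall (n m : nat) (sigma : rel ('I_n * 'I_m)),
      1 <= n <= m -> n <= 4 -> signature_on (grid_adj n m) sigma ->
      chi_s (grid_adj n m) sigma <= 5)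
  /\ (exists (n m : nat) (sigma : rel ('I_n * 'I_m)),
      signature_on (grid_adj n m) sigma /\ chi_s (grid_adj n m) sigma = 5).
Proof.
split; first by move=> n m sigma _ Hs; apply: part1.
split; first by move=> n m sigma _ Hn Hs; apply: part2.
exists 3, 4, sigma_ex; split; first exact: sigma_ex_sym.
apply/eqP; rewrite eqn_leq; apply/andP; split.
  by apply: part2 => //; exact: sigma_ex_sym.
apply: (chi_ge (k0:=5)); first by apply: part2_hom => //; exact: sigma_ex_sym.
by move=> k Hk; apply: lower.
Qed.
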